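(* Let $\mathcal{M}_{\mathbb{P}}=(\mathcal{M},\mathbb{P})$ be an uncertain parametric MDP, let $\eta\in(0,1)$ be a desired lower bound and $\beta\in(0,1)$ a desired confidence probability, and set \[N=\Big\lceil \frac{\log(1-\beta)}{\log\eta}\Big\rceil .\] If $\mathcal{U}_N$ is a set of $N$ parameter instantiations sampled independently from $\mathbb{P}$ and the threshold $\lambda^*(\mathcal{U}_N)$ of the specification $\varphi$ is chosen, for any sample set, such that $\mathcal{M}[u]\models\varphi$ for all $u\in\mathcal{U}_N$, then $\mathbb{P}^N\{F(\mathcal{M}_{\mathbb{P}},\varphi)\ge\eta\}\ge\beta$; moreover, this $N$ is the smallest sample size for which the lower bound $(1-\beta)^{1/N}$ of the guarantee $\mathbb{P}^N\{F(\mathcal{M}_{\mathbb{P}},\varphi)\ge(1-\beta)^{1/N}\}\ge\beta$ is at least $\eta$.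
   Context: A parametric MDP (pMDP) is $\mathcal{M}=(S,\mathit{Act},s_I,V,\mathcal{P})$ with finite states, finite actions, initial state, finite parameter set $V$ and transition function $\mathcal{P}:S\times\mathit{Act}\times S\to\mathbb{Q}[V]$. Instantiations $u:V\to\mathbb{R}$ form the parameter space $\mathcal{V}_{\mathcal{M}}$; $\mathcal{M}[u]$ is the instantiated MDP, assumed well-defined and graph-preserving. An uncertain pMDP is $\mathcal{M}_{\mathbb{P}}=(\mathcal{M},\mathbb{P})$ with $\mathbb{P}$ a probability distribution on $\mathcal{V}_{\mathcal{M}}$. A specification $\varphi$ consists of a measure on MDPs (e.g. max/min reachability probability or expected reward), a comparison operator in $\{<,\le,\ge,>\}$ and a threshold; $\mathcal{M}[u]\models\varphi$ means the measure's value on $\mathcal{M}[u]$ satisfies the comparison. The satisfaction probability is $F(\mathcal{M}_{\mathbb{P}},\varphi)=\int I_\varphi(u)\,d\mathbb{P}(u)$ with $I_\varphi(u)=1$ iff $\mathcal{M}[u]\models\varphi$. $\mathbb{P}^N$ is the product measure of the i.i.d. sample set; $\lceil x\rceil$ rounds up to the nearest integer. *)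

(* Defs.v *)
From HB Require Import structures.
From mathcomp Require Import all_boot all_order all_algebra.
From mathcomp Require Import all_classical all_reals all_analysis.
From mathcomp Require mpoly.
Import (canonicals, coercions) mpoly.

Set Implicit Arguments.
Unset Strict Implicit.
Unset Printing Implicit Defensive.
Import Order.TTheory GRing.Theory Num.Theory.
Local Open Scope classical_set_scope.
Local Open Scope ring_scope.

(** Parameters: the finite parameter set V is {x_0, ..., x_{k-1}} = 'I_k;
    an instantiation u : V -> R is a k-tuple of reals (the parameter space
    k.-tuple R carries the product Borel sigma-algebra). *)

Record pMDP (k : nat) := PMDP {
  pS : finType;
  pAct : finType;
  psI : pS;
  pP : pS -> pAct -> pS -> mpoly.mpoly k rat }.
Arguments pS {k} p.
Arguments pAct {k} p.
Arguments psI {k} p.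
Arguments pP {k} p _ _ _.

Record MDP (R : Type) := MkMDP {
  mS : finType;
  mAct : finType;
  msI : mS;
  mP : mS -> mAct -> mS -> R }.
Arguments mP {R} m _ _ _.

Definition peval (R : realType) (k : nat) (p : mpoly.mpoly k rat)
  (u : k.-tuple R) : R :=
  mpoly.mmap (@ratr R) (fun i => tnth u i) p.

Definition inst (R : realType) k (M : pMDP k) (u : k.-tuple R) : MDP R :=
  @MkMDP R (pS M) (pAct M) (psI M)
    (fun s a s' => peval (pP M s a s') u).

(** M[u] is well defined (each row P(s,a,.) is a probability distribution,
    or identically zero when a is not enabled in s) and graph preserving. *)
Definition well_defined_gp (R : realType) k (M : pMDP k) (u : k.-tuple R) : Prop :=
  (forall s a s', 0 <= peval (pP M s a s') u) /\
  (forall s a, \sum_(s' : pS M) peval (pP M s a s') u = 1 \/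
               forall s', peval (pP M s a s') u = 0) /\
  (forall s a s', pP M s a s' != 0 -> peval (pP M s a s') u != 0).

Inductive cmp := CLt | CLe | CGe | CGt.

Definition cmp_eval (R : realType) (c : cmp) (x y : \bar R) : bool :=
  match c with
  | CLt => (x < y)%E
  | CLe => (x <= y)%E
  | CGe => (x >= y)%E
  | CGt => (x > y)%E
  end.

(** A specification: a measure on MDPs (possibly extended-real valued, e.g.
    expected rewards), a comparison operator and a threshold. *)
Record spec (R : realType) := Spec {
  smeas : MDP R -> \bar R;
  sop : cmp;
  sthr : R }.

Definition sat (R : realType) (D : MDP R) (phi : spec R) : Prop :=
  cmp_eval (sop phi) (smeas phi D) (sthr phi)%:E.

Definition Ind (R : realType) k (M : pMDP k) (phi : spec R) (u : k.-tuple R) : \bar R :=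
  (\1_[set u | sat (inst M u) phi] u)%:E.

Definition satprob (R : realType) k (M : pMDP k)
  (P : probability (k.-tuple R) R) (phi : spec R) : \bar R :=
  (\int[P]_u Ind M phi u)%E.

(** Q is the N-fold product measure P^N on N-tuples (i.i.d. samples):
    it agrees with the product of P on measurable rectangles (this
    uniquely determines the product probability). *)
Definition is_product_prob d (T : measurableType d) (R : realType) (N : nat)
  (P : probability T R) (Q : probability (N.-tuple T) R) : Prop :=
  forall A : 'I_N -> set T, (forall i, measurable (A i)) ->
    Q [set t | forall i, A i (tnth t i)] = (\prod_(i < N) P (A i))%E.

(* Main.v *)
Require Import Defs.
From HB Require Import structures.
From mathcomp Require Import all_boot all_order all_algebra.
From mathcomp Require Import all_classical all_reals all_analysis.
From mathcomp Require Import measurable_realfun.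

Import Order.TTheory GRing.Theory Num.Theory.
Local Open Scope classical_set_scope.
Local Open Scope ring_scope.

Section key.
Context d (T : measurableType d) (R : realType) (P : probability T R).
Variable f : R -> set T.
Hypothesis mf : forall l, measurable (f l).
Hypothesis homf : forall x y, x <= y -> f x `<=` f y.

Lemma seq_bound (eta : R) (a : nat -> R) :
  {homo a : n m / (n <= m)%N >-> n <= m} ->
  (forall n, (P (f (a n)) < eta%:E)%E) ->
  (P (\bigcup_n f (a n)) <= eta%:E)%E.
Proof.
move=> ha hP.
have H := @nondecreasing_cvg_mu _ _ _ P (fun n => f (a n)) (fun n => mf _)
  (bigcupT_measurable _ (fun n => mf _)).
have /H {}H : nondecreasing_seq (fun n => f (a n)).
  move=> n m nm; apply/subsetPset; apply: homf; exact: ha.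
apply: (cvge_to_le H).
by apply: nearW => n /=; exact: ltW.
Qed.

End key.

Section key2.
Context d (T : measurableType d) (R : realType) (P : probability T R).
Variable f : R -> set T.
Hypothesis mf : forall l, measurable (f l).
Hypothesis homf : forall x y, x <= y -> f x `<=` f y.

Lemma key (eta : R) : 0 <= eta ->
  exists B, measurable B /\ (P B <= eta%:E)%E /\
    forall l, (P (f l) < eta%:E)%E -> f l `<=` B.
Proof.
move=> eta0.
set D := [set l | (P (f l) < eta%:E)%E].
have Ddown : forall x y, x <= y -> D y -> D x.
  move=> x y xy Dy; rewrite /D /=; apply: le_lt_trans Dy.
  apply: le_measure; [exact: mem_set (mf x)|exact: mem_set (mf y)|exact: homf].
case: (pselect (exists l, D l)) => [[l0 Dl0]|nD]; last first.
  exists set0; split => //; split; first by rewrite measure0 lee_fin.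
  by move=> l Dl; exfalso; apply: nD; exists l.
case: (pselect (has_ubound D)) => [ubD|nub].
  have hs : has_sup D by split; [exists l0|].
  case: (pselect (D (sup D))) => [Ds|nDs].
    exists (f (sup D)); split; first exact: mf.
    split; first exact: ltW.
    by move=> l Dl; apply: homf; exact: sup_upper_bound hs _ Dl.
  exists (\bigcup_n f (sup D - n.+1%:R^-1)); split.
    exact: bigcupT_measurable.
  have Da : forall n, D (sup D - n.+1%:R^-1).
    move=> n.
    have [|e De lte] := @sup_adherent _ D (n.+1%:R^-1) _ hs.
      by rewrite invr_gt0 ltr0n.
    exact: Ddown (ltW lte) De.
  split.
    apply: seq_bound => //.
    move=> n m nm; apply: lerB => //.
    by rewrite lef_pV2 ?posrE ?ltr0n // ler_nat ltnS.
  move=> l Dl.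
  have lts : l < sup D.
    rewrite lt_neqAle (sup_upper_bound hs Dl) andbT.
    by apply/eqP => e; apply: nDs; rewrite -e.
  have [k hk] := ltr_add_invr lts.
  move=> x fx; exists k => //; apply: (homf l) fx.
  by rewrite lerBrDr ltW.
exists (\bigcup_n f n%:R); split.
  exact: bigcupT_measurable.
have Da : forall n, D n%:R.
  move=> n.
  case: (pselect (exists2 y, D y & n%:R <= y)) => [[y Dy ny]|h].
    exact: Ddown ny Dy.
  exfalso; apply: nub; exists n%:R => y Dy.
  rewrite leNgt; apply/negP => /ltW ny; apply: h; by exists y.
split.
  apply: seq_bound => //.
  by move=> n m nm; rewrite ler_nat.
move=> l Dl x fx; exists (Num.truncn l).+1 => //.
apply: (homf l) fx; exact: ltW (truncnS_gt l).
Qed.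

End key2.

Lemma Pfin d (T : measurableType d) (R : realType) (P : probability T R) A :
  measurable A -> P A = (fine (P A))%:E.
Proof. by move=> mA; rewrite fineK // (fin_num_measure P). Qed.

Lemma gen d (T : measurableType d) (R : realType) (P : probability T R) N
  (Q : probability (N.-tuple T) R) (f : R -> set T) (lam : N.-tuple T -> R)
  (eta : R) :
  (forall l, measurable (f l)) -> (forall x y, x <= y -> f x `<=` f y) ->
  is_product_prob P Q -> measurable_fun setT lam ->
  (forall U i, f (lam U) (tnth U i)) -> 0 <= eta ->
  ((1 - eta ^+ N)%:E <= Q [set U | (eta%:E <= P (f (lam U)))%E])%E.
Proof.
move=> mf homf hQ mlam hU eta0.
have [B [mB [PB hB]]] := @key _ _ _ P f mf homf eta eta0.
set G := [set U | _].
pose h := fun l => fine (P (f l)).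
have mh : measurable_fun setT h.
  apply: nondecreasing_measurable => // x y xy.
  rewrite /h -lee_fin -!Pfin //.
  by apply: le_measure; [exact: mem_set (mf x)|exact: mem_set (mf y)|exact: homf].
have mG : measurable G.
  have := mlam measurableT _ (mh measurableT _ (measurable_itv `[eta, +oo[)).
  rewrite !setTI; congr measurable; apply/seteqP; split => U /=;
    by rewrite in_itv /= andbT /h -lee_fin -Pfin.
set R0 := [set U : N.-tuple T | forall i, B (tnth U i)].
have mR0 : measurable R0.
  have -> : R0 = \bigcap_(i in [set: 'I_N]) ((fun U : N.-tuple T => tnth U i) @^-1` B).
    by apply/seteqP; split => U /= HU i; [move=> _; exact: HU|exact: HU].
  apply: fin_bigcap_measurable; first exact: finite_finset.
  move=> i _; have := @measurable_tnth _ T N i measurableT B mB; by rewrite setTI.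
have QR0 : (Q R0 <= (eta ^+ N)%:E)%E.
  rewrite /R0 (hQ (fun=> B)) // Pfin // prodEFin lee_fin.
  rewrite prodr_const card_ord lerXn2r ?nnegrE ?fine_ge0 ?measure_ge0 //.
  by rewrite -lee_fin -Pfin.
have sub : ~` G `<=` R0.
  move=> U /= nG i; apply: (hB (lam U)); last exact: hU.
  by rewrite ltNge; apply/negP.
rewrite -[G]setCK probability_setC; last exact: measurableC.
rewrite EFinB; apply: leeB => //.
apply: le_trans _ QR0.
by apply: le_measure => //; rewrite inE; [exact: measurableC|].
Qed.

Lemma equiv_n (R : realType) (eta beta : R) (n : nat) :
  0 < eta < 1 -> 0 < beta < 1 -> (0 < n)%N ->
  (eta <= (1 - beta) `^ (n%:R^-1)) = (ln (1 - beta) / ln eta <= n%:R).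
Proof.
move=> /andP[e0 e1] /andP[b0 b1] n0.
have a0 : ln eta < 0 by rewrite ln_lt0 // e0.
have b1' : 0 < 1 - beta by rewrite subr_gt0.
rewrite -ler_ln ?posrE ?powR_gt0 // ln_powR ler_pdivlMl ?ltr0n //.
by rewrite ler_ndivrMr // mulrC.
Qed.

Lemma powN_le (R : realType) (eta beta : R) (n : nat) :
  0 < eta < 1 -> 0 < beta < 1 ->
  ln (1 - beta) / ln eta <= n%:R -> eta ^+ n <= 1 - beta.
Proof.
move=> /andP[e0 e1] /andP[b0 b1] hn.
have a0 : ln eta < 0 by rewrite ln_lt0 // e0.
have b1' : 0 < 1 - beta by rewrite subr_gt0.
rewrite -ler_ln ?posrE ?exprn_gt0 // lnXn // -mulr_natr.
by rewrite mulrC -ler_ndivrMr.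
Qed.

Theorem corollary1 (R : realType) (k : nat) (M : pMDP k)
  (P : probability (k.-tuple R) R)
  (meas : MDP R -> \bar R) (op : cmp)
  (eta beta : R) (N : nat)
  (Q : probability (N.-tuple (k.-tuple R)) R)
  (lam : N.-tuple (k.-tuple R) -> R) :
  P [set u | well_defined_gp M u] = 1%E ->
  (forall l : R, measurable [set u | sat (inst M u) (Spec meas op l)]) ->
  0 < eta < 1 -> 0 < beta < 1 ->
  N%:Z = Num.ceil (ln (1 - beta) / ln eta) ->
  is_product_prob P Q ->
  measurable_fun setT lam ->
  (forall U : N.-tuple (k.-tuple R),
      forall i : 'I_N, sat (inst M (tnth U i)) (Spec meas op (lam U))) ->
  (beta%:E <= Q [set U | (eta%:E <= satprob M P (Spec meas op (lam U)))%E])%E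
  /\ (eta <= (1 - beta) `^ (N%:R^-1)
      /\ forall n : nat, (0 < n)%N -> eta <= (1 - beta) `^ (n%:R^-1) -> (N <= n)%N).
Proof.
move=> _ hmeas he hb hN hQ mlam hU.
have /andP[e0 e1] := he; have /andP[b0 b1] := hb.
have a0 : ln eta < 0 by rewrite ln_lt0 // e0.
have L0 : ln (1 - beta) < 0.
  by apply: ln_lt0; rewrite subr_gt0 b1 /= ltrBlDr ltrDl b0.
set c := ln (1 - beta) / ln eta.
have c0 : 0 < c by rewrite /c ltr_ndivlMr // mul0r.
have cN : c <= N%:R.
  have := ceil_ge c; rewrite -hN.
  by rewrite -pmulrn.
have N0 : (0 < N)%N.
  by rewrite -(ltr0n R); apply: lt_le_trans cN.
split; last split.
- set g := fun l => [set u | sat (inst M u) (Spec meas op l)].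
  have sp : forall l, satprob M P (Spec meas op l) = P (g l).
    by move=> l; rewrite /satprob /Ind integral_indic ?setIT //; exact: hmeas.
  have hbe : (beta%:E <= (1 - eta ^+ N)%:E)%E.
    rewrite lee_fin lerBrDr addrC -lerBrDr.
    exact: powN_le.
  apply: (le_trans hbe).
  have -> : [set U | (eta%:E <= satprob M P (Spec meas op (lam U)))%E] =
            [set U | (eta%:E <= P (g (lam U)))%E].
    by apply/seteqP; split => U /=; rewrite sp.
  destruct op.
  + have H := (@gen _ _ _ P N Q g lam eta).
    refine (H hmeas _ hQ mlam hU (ltW e0)).
    move=> x y xy u /=; rewrite /sat /= => h; apply: lt_le_trans h _.
    by rewrite lee_fin.
  + have H := (@gen _ _ _ P N Q g lam eta).
    refine (H hmeas _ hQ mlam hU (ltW e0)).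
    move=> x y xy u /=; rewrite /sat /= => h; apply: le_trans h _.
    by rewrite lee_fin.
  + have H := @gen _ _ _ P N Q (fun l : R => g (- l)%R) (fun U => (- lam U)%R) eta
      (fun l : R => hmeas (- l)%R) _ hQ (measurable_funN mlam) _ (ltW e0).
    have E : [set U | (eta%:E <= P ((fun l : R => g (- l)%R) (- lam U)%R))%E] =
            [set U | (eta%:E <= P (g (lam U)))%E].
      by apply/seteqP; split => U /=; rewrite opprK.
    rewrite -E; apply: H.
      move=> x y xy u /=; rewrite /sat /= => h; apply: le_trans h.
      by rewrite lee_fin lerN2.
    by move=> U i /=; rewrite opprK; exact: hU.
  + have H := @gen _ _ _ P N Q (fun l : R => g (- l)%R) (fun U => (- lam U)%R) eta
      (fun l : R => hmeas (- l)%R) _ hQ (measurable_funN mlam) _ (ltW e0).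
    have E : [set U | (eta%:E <= P ((fun l : R => g (- l)%R) (- lam U)%R))%E] =
            [set U | (eta%:E <= P (g (lam U)))%E].
      by apply/seteqP; split => U /=; rewrite opprK.
    rewrite -E; apply: H.
      move=> x y xy u /=; rewrite /sat /= => h; apply: le_lt_trans h.
      by rewrite lee_fin lerN2.
    by move=> U i /=; rewrite opprK; exact: hU.
- by rewrite equiv_n.
- move=> n n0; rewrite equiv_n // => hn.
  rewrite -lez_nat hN ceil_le_int.
  by rewrite -pmulrn.
Qed.
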